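(* Let $M\subseteq\mathbb N$ be infinite, let $\mathcal B$ be a barrier on $M$, and let $f:\mathcal B\to c_0$ be an internal mapping which is bounded, i.e. there is $C$ such that $\|f(s)\|_\infty\le C$ for every $s\in\mathcal B$. Then for every $\varepsilon>0$ there exist an infinite set $N\subseteq M$ and a $U$-mapping $g:\mathcal B\upharpoonright N\to c_{00}$ such that $\|f(s)-g(s)\|_{\ell_1}\le\varepsilon$ for every $s\in\mathcal B\upharpoonright N$.
   Context: $\mathbb N=\{0,1,2,\dots\}$; $\mathrm{FIN}$ is the family of finite subsets of $\mathbb N$. For $X,Y\subseteq\mathbb N$: $X<Y$ means $\max X<\min Y$ (with $\emptyset<X$ and $X<\emptyset$ for all $X$); $X\sqsubseteq Y$ means $X\subseteq Y$ and $X<Y\setminus X$; $X/Y=\{m\in X: m>\max Y\}$. A family $\mathcal B\subseteq\mathrm{FIN}$ is a barrier on $M$ if every member is a subset of $M$, no member is a proper subset of another member, and every infinite $N\subseteq M$ has some $s\in\mathcal B$ with $s\sqsubseteq N$. For a family $\mathcal F$ and $N\subseteq\mathbb N$, $\mathcal F\upharpoonright N=\{s\in\mathcal F: s\subseteq N\}$. For $\xi\in c_0$, $\mathrm{supp}\,\xi=\{i:\xi(i)\ne0\}$; $c_{00}$ denotes finitely supported sequences. A map $f:\mathcal F\to c_0$ ($\mathcal F\subseteq\mathrm{FIN}$) is internal if $\mathrm{supp}\, f(s)\subseteq s$ for all $s\in\mathcal F$; it is uniform if for every $t\in\mathrm{FIN}$ all values $f(s)(\min(s/t))$, for $s\in\mathcal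 F$ with $t\sqsubseteq s$ and $s/t\neq\emptyset$, coincide; a $U$-mapping is an internal uniform mapping. *)

(* Defs.v *)
From Stdlib Require Import Reals.
Open Scope R_scope.

Definition natset := nat -> Prop.

Definition subset (X Y : natset) : Prop := forall k, X k -> Y k.

Definition finset (X : natset) : Prop := exists n, forall k, X k -> (k < n)%nat.

Definition infinite (X : natset) : Prop := forall n, exists k, (n <= k)%nat /\ X k.

(* X < Y : max X < min Y, with emptyset < X and X < emptyset *)
Definition set_lt (X Y : natset) : Prop := forall x y, X x -> Y y -> (x < y)%nat.

Definition setminus (X Y : natset) : natset := fun k => X k /\ ~ Y k.

Definition initial_seg (X Y : natset) : Prop := subset X Y /\ set_lt X (setminus Y X).

(* X / Y = {m in X : m > max Y}  (Y finite; for Y empty this is X) *)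
Definition set_after (X Y : natset) : natset := fun m => X m /\ forall y, Y y -> (y < m)%nat.

Definition is_min (m : nat) (X : natset) : Prop := X m /\ forall k, X k -> (m <= k)%nat.

Definition barrier (B : natset -> Prop) (M : natset) : Prop :=
  (forall s, B s -> finset s /\ subset s M) /\
  (forall s t, B s -> B t -> subset s t -> subset t s) /\
  (forall N, subset N M -> infinite N -> exists s, B s /\ initial_seg s N).

Definition restrict (F : natset -> Prop) (N : natset) : natset -> Prop :=
  fun s => F s /\ subset s N.

Definition in_c0 (x : nat -> R) : Prop := Un_cv x 0.

Definition in_c00 (x : nat -> R) : Prop := exists n, forall i, (n <= i)%nat -> x i = 0.

Definition supp (x : nat -> R) : natset := fun i => x i <> 0.

Definition internal (F : natset -> Prop) (f : natset -> nat -> R) : Prop :=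
  forall s, F s -> subset (supp (f s)) s.

Definition uniform (F : natset -> Prop) (f : natset -> nat -> R) : Prop :=
  forall t, finset t -> forall s s' m m',
    F s -> F s' -> initial_seg t s -> initial_seg t s' ->
    is_min m (set_after s t) -> is_min m' (set_after s' t) ->
    f s m = f s' m'.

Definition U_mapping (F : natset -> Prop) (f : natset -> nat -> R) : Prop :=
  internal F f /\ uniform F f.

Definition sup_norm_le (x : nat -> R) (C : R) : Prop := forall i, Rabs (x i) <= C.

Definition l1_norm_le (x : nat -> R) (e : R) : Prop :=
  exists L, infinite_sum (fun i => Rabs (x i)) L /\ L <= e.

(* Main.v *)
Require Import Defs.
From Stdlib Require Import Arith Reals Lia Lra List Classical ClassicalEpsilon FunctionalExtensionality PropExtensionality.
Open Scope R_scope.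

Lemma set_ext (X Y : natset) : (forall k, X k <-> Y k) -> X = Y.
Proof. intro H; apply functional_extensionality; intro k; apply propositional_extensionality; auto. Qed.

Definition empty : natset := fun _ => False.
Definition union (X Y : natset) : natset := fun k => X k \/ Y k.
Definition above (A : natset) (n : nat) : natset := fun k => A k /\ (n < k)%nat.
Definition lset (l : list nat) : natset := fun x => In x l.

Lemma infinite_above A n : infinite A -> infinite (above A n).
Proof. intros H m. destruct (H (Nat.max m (S n))) as [k [Hk Ak]]. exists k; split; [lia|split; [auto|lia]]. Qed.

Lemma infinite_after A s : infinite A -> finset s -> infinite (set_after A s).
Proof. intros H [b Hb] m. destruct (H (Nat.max m b)) as [k [Hk Ak]]. exists k; split; [lia|split; auto].
intros y Hy; specialize (Hb y Hy); lia. Qed.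

Lemma least_ex (P : nat -> Prop) : (exists n, P n) -> exists m, P m /\ forall k, P k -> (m <= k)%nat.
Proof.
intros [n Hn]. destruct (classic (exists m, P m /\ forall k, P k -> (m <= k)%nat)) as [H|H]; auto.
exfalso. assert (forall n k, (k <= n)%nat -> ~ P k).
{ induction n0; intros k Hk Pk.
  - apply H; exists k; split; auto; intros; lia.
  - apply H; exists k; split; auto; intros j Pj. destruct (le_lt_dec k j); auto.
    exfalso; apply (IHn0 j); auto; lia. }
apply (H0 n n); auto.
Qed.

Lemma finset_lset l : finset (lset l).
Proof. induction l as [|x l [b Hb]].
- exists 0%nat; intros k [].
- exists (Nat.max (S x) b); intros k [->|Hk]; [lia|specialize (Hb k Hk); lia]. Qed.

Lemma finset_union s t : finset s -> finset t -> finset (union s t).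
Proof. intros [a Ha] [b Hb]; exists (Nat.max a b); intros k [H|H]; [specialize (Ha k H)|specialize (Hb k H)]; lia. Qed.

Lemma finset_single n : finset (fun y => y = n).
Proof. exists (S n); intros; lia. Qed.

Lemma finset_sub s t : subset s t -> finset t -> finset s.
Proof. intros H [b Hb]; exists b; intros k Hk; apply Hb, H, Hk. Qed.

Lemma list_step : forall (l : list nat) (Q : natset -> natset -> Prop),
  (forall s A A', Q s A' -> subset A A' -> Q s A) ->
  (forall s A, finset s -> infinite A -> exists A', infinite A' /\ subset A' A /\ Q s A') ->
  forall A, infinite A -> exists A', infinite A' /\ subset A' A /\ forall s, subset s (lset l) -> Q s A'.
Proof.
induction l as [|x l IH]; intros Q Qm Qd A HA.
- destruct (Qd empty A) as [A' [H1 [H2 H3]]]; auto. exists 0%nat; intros k [].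
  exists A'; repeat split; auto. intros s Hs.
  replace s with empty; auto. apply set_ext; intro k; split; [intros []|intro H; destruct (Hs k H)].
- set (Q' := fun s A => Q s A /\ Q (union s (fun y => y = x)) A).
  destruct (IH Q') with (A := A) as [A' [H1 [H2 H3]]]; auto.
  + intros s B B' [q1 q2] Hs; split; eapply Qm; eauto.
  + intros s B Hs HB. destruct (Qd s B) as [B1 [E1 [E2 E3]]]; auto.
    destruct (Qd (union s (fun y => y = x)) B1) as [B2 [F1 [F2 F3]]]; auto.
    { apply finset_union; auto; apply finset_single. }
    exists B2; repeat split; auto. { intros k Hk; apply E2, F2, Hk. } eapply Qm; eauto.
  + exists A'; repeat split; auto. intros s Hs.
    set (s' := fun y => s y /\ y <> x).
    assert (Hs' : subset s' (lset l)).
    { intros k [Hk Hne]. destruct (Hs k Hk); auto. congruence. }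
    destruct (H3 s' Hs') as [q1 q2].
    destruct (classic (s x)) as [Hx|Hx].
    * replace s with (union s' (fun y => y = x)); auto.
      apply set_ext; intro k; unfold union, s'; split.
      { intros [[a b]|a]; subst; auto. }
      { intro Hk; destruct (classic (k = x)); auto. }
    * replace s with s'; auto. apply set_ext; intro k; unfold s'; split; [tauto|].
      intro Hk; split; auto; intro; subst; auto.
Qed.

Section Fusion.
Variable P : natset -> natset -> Prop.
Hypothesis Pmono : forall s A A', P s A' -> (forall x, A x -> (forall y, s y -> (y < x)%nat) -> A' x) -> P s A.
Hypothesis Pdense : forall s A, finset s -> infinite A -> exists A', infinite A' /\ subset A' A /\ P s A'.

Definition Spec (l : list nat) (A : natset) (r : nat * natset) : Prop :=
  infinite (snd r) /\ subset (snd r) A /\ (forall s, subset s (lset l) -> P s (snd r)) /\ snd r (fst r).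

Lemma step_ex l A : infinite A -> exists r, Spec l A r.
Proof.
intro HA. destruct (list_step l P) with (A := A) as [A' [H1 [H2 H3]]]; auto.
{ intros s B B' H HB; eapply Pmono; eauto. }
destruct (H1 0%nat) as [a [_ Ha]]. exists (a, A'); repeat split; auto.
Qed.

Definition stepf (l : list nat) (A : natset) : nat * natset :=
  epsilon (inhabits (0%nat, A)) (fun r => infinite A -> Spec l A r).

Lemma stepf_spec l A : infinite A -> Spec l A (stepf l A).
Proof.
intro HA. unfold stepf. apply (@epsilon_spec _ _ (fun r => infinite A -> Spec l A r)).
destruct (step_ex l A HA) as [r Hr]; exists r; auto. exact HA.
Qed.

Fixpoint st (A0 : natset) (k : nat) : list nat * natset :=
  match k with
  | O => (nil, A0)
  | S k' => let p := st A0 k' in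
            let r := stepf (fst p) (snd p) in
            (fst p ++ fst r :: nil, above (snd r) (fst r))
  end.

Variable A0 : natset.
Hypothesis HA0 : infinite A0.

Definition av k := fst (stepf (fst (st A0 k)) (snd (st A0 k))).
Definition Bv k := snd (stepf (fst (st A0 k)) (snd (st A0 k))).

Lemma st_inf k : infinite (snd (st A0 k)) /\ subset (snd (st A0 k)) A0.
Proof.
induction k as [|k [IH1 IH2]]; simpl.
- split; auto. intros x Hx; auto.
- destruct (stepf_spec (fst (st A0 k)) (snd (st A0 k)) IH1) as [S1 [S2 _]]. split.
  + apply infinite_above; auto.
  + intros x [Hx _]. apply IH2, S2, Hx.
Qed.

Lemma spec_k k : Spec (fst (st A0 k)) (snd (st A0 k)) (av k, Bv k).
Proof. unfold av, Bv. rewrite <- surjective_pairing. apply stepf_spec, st_inf. Qed.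

Lemma st_list k x : In x (fst (st A0 k)) <-> exists i, (i < k)%nat /\ x = av i.
Proof.
induction k as [|k IH]; simpl.
- split; [intros []|intros [i [Hi _]]; lia].
- rewrite in_app_iff; simpl. split.
  + intros [H|[H|[]]].
    * destruct (proj1 IH H) as [i [Hi E]]; exists i; split; auto; lia.
    * exists k; split; [lia|]. unfold av; auto.
  + intros [i [Hi E]]. destruct (Nat.eq_dec i k).
    * subst; right; left; unfold av; auto.
    * left; apply IH; exists i; split; auto; lia.
Qed.

Lemma st_later k m : (k < m)%nat -> forall x, snd (st A0 m) x -> Bv k x /\ (av k < x)%nat.
Proof.
intro H; induction H; intros x Hx; simpl in Hx.
- destruct Hx as [Hx Hlt]; split; auto.
- destruct Hx as [Hx Hlt]. destruct (spec_k m) as [_ [S2 _]].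
  apply IHle, S2, Hx.
Qed.

Lemma av_in k m : (k <= m)%nat -> Bv k (av m).
Proof.
intro H. destruct (spec_k m) as [_ [S2 [_ S4]]]. simpl in *.
destruct (le_lt_eq_dec _ _ H) as [Hl|<-]; auto.
apply (st_later k m Hl), S2, S4.
Qed.

Lemma av_incr k m : (k < m)%nat -> (av k < av m)%nat.
Proof.
intro H. destruct (spec_k m) as [_ [S2 [_ S4]]]. simpl in *.
apply (st_later k m H), S2, S4.
Qed.

Lemma av_ge k : (k <= av k)%nat.
Proof. induction k; [lia|]. pose proof (av_incr k (S k)); lia. Qed.

Lemma av_mono k m : (av k <= av m)%nat -> (k <= m)%nat.
Proof. intro H; destruct (le_lt_dec k m); auto. pose proof (av_incr m k l); lia. Qed.

Definition Nf : natset := fun x => exists k, x = av k.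

Lemma fusion_result : infinite Nf /\ subset Nf A0 /\ forall s, finset s -> subset s Nf -> P s Nf.
Proof.
split; [|split].
- intro n; exists (av n); split; [apply av_ge|exists n; auto].
- intros x [k ->]. destruct (spec_k k) as [_ [S2 [_ S4]]]. apply (proj2 (st_inf k)), S2, S4.
- intros s [b Hb] Hs.
  destruct (least_ex (fun j => forall x, s x -> exists i, (i < j)%nat /\ x = av i)) as [J [HJ1 HJ2]].
  { exists b; intros x Hx. destruct (Hs x Hx) as [i ->]. exists i; split; auto.
    specialize (Hb _ Hx); pose proof (av_ge i); lia. }
  destruct J as [|k].
  + destruct (spec_k 0) as [_ [_ [S3 _]]]. simpl in S3.
    eapply Pmono. apply S3. { intros x Hx; destruct (HJ1 x Hx) as [i [Hi _]]; lia. }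
    intros x [m ->] _. apply av_in; lia.
  + destruct (spec_k (S k)) as [_ [_ [S3 _]]]. simpl in S3.
    eapply Pmono. apply S3.
    { intros x Hx; apply (proj2 (st_list (S k) x)); auto. }
    intros x [m ->] Hab.
    assert (Hk : s (av k)).
    { destruct (classic (s (av k))) as [?|Hn]; auto. exfalso.
      assert (HH := HJ2 k). assert (k < S k)%nat by lia.
      enough (S k <= k)%nat by lia. apply HH. intros x Hx.
      destruct (HJ1 x Hx) as [i [Hi ->]]. exists i; split; auto.
      destruct (Nat.eq_dec i k); [subst; contradiction|lia]. }
    specialize (Hab _ Hk). apply av_in.
    destruct (le_lt_dec (S k) m); auto. assert (m <= k)%nat by lia.
    destruct (le_lt_eq_dec _ _ H) as [Hl| ->]; [pose proof (av_incr _ _ Hl)|idtac]; lia.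
Qed.
End Fusion.

Lemma fusion (P : natset -> natset -> Prop) :
  (forall s A A', P s A' -> (forall x, A x -> (forall y, s y -> (y < x)%nat) -> A' x) -> P s A) ->
  (forall s A, finset s -> infinite A -> exists A', infinite A' /\ subset A' A /\ P s A') ->
  forall A, infinite A -> exists N, infinite N /\ subset N A /\ forall s, finset s -> subset s N -> P s N.
Proof. intros H1 H2 A HA. exists (Nf P A). apply fusion_result; auto. Qed.

Lemma initial_seg_self_union u X : initial_seg u (union u (set_after X u)).
Proof.
split. { intros k Hk; left; auto. }
intros x y Hx [[Hy|[_ Hy]] Hn]; [contradiction|auto].
Qed.

Section Forcing.
Variable F : natset -> Prop.
Hypothesis Ffin : forall u, F u -> finset u.

Definition accepts s A := forall X, infinite X -> subset X A ->
  exists u, F u /\ initial_seg u (union s (set_after X s)).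
Definition rejects s A := forall A', infinite A' -> subset A' A -> ~ accepts s A'.
Definition Pdec s A := finset s -> accepts s A \/ rejects s A.

Lemma accepts_sub s A A' : accepts s A' -> subset A A' -> accepts s A.
Proof. intros H HA X HX HXA. apply H; auto. intros k Hk; apply HA, HXA, Hk. Qed.

Lemma Pdec_mono s A A' : Pdec s A' -> (forall x, A x -> (forall y, s y -> (y < x)%nat) -> A' x) -> Pdec s A.
Proof.
intros H HA Hs. destruct (H Hs) as [Ha|Hr].
- left. intros X HX HXA.
  destruct (Ha (set_after X s)) as [u [Fu Iu]].
  { apply infinite_after; auto. }
  { intros x [Xx Hx]. apply HA; auto. }
  exists u; split; auto.
  replace (set_after (set_after X s) s) with (set_after X s) in Iu; auto.
  apply set_ext; intro k; unfold set_after; tauto.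
- right. intros A2 HA2 HA2A Hacc. apply (Hr (set_after A2 s)).
  + apply infinite_after; auto.
  + intros x [Xx Hx]. apply HA; auto.
  + eapply accepts_sub; eauto. intros x [Hx _]; auto.
Qed.

Lemma Pdec_dense s A : finset s -> infinite A -> exists A', infinite A' /\ subset A' A /\ Pdec s A'.
Proof.
intros Hs HA. destruct (classic (rejects s A)) as [Hr|Hr].
- exists A; split; [auto|split; [intros k Hk; auto|intros _; right; auto]].
- unfold rejects in Hr. apply not_all_ex_not in Hr as [A' Hr].
  apply imply_to_and in Hr as [H1 Hr]. apply imply_to_and in Hr as [H2 Hr].
  apply NNPP in Hr. exists A'; split; [auto|split; [auto|intros _; left; auto]].
Qed.

Lemma F4 N1 s : (forall s, finset s -> subset s N1 -> Pdec s N1) ->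
  finset s -> subset s N1 -> rejects s N1 ->
  exists K, forall n, N1 n -> (forall y, s y -> (y < n)%nat) -> (K <= n)%nat ->
    rejects (union s (fun y => y = n)) N1.
Proof.
intros Hdec Hs HsN Hr. apply NNPP; intro Hc.
set (Y := fun n => N1 n /\ (forall y, s y -> (y < n)%nat) /\ accepts (union s (fun y => y = n)) N1).
assert (HY : infinite Y).
{ intro K. apply NNPP; intro HK. apply Hc. exists K. intros n Hn Hab HKn.
  assert (Hd : accepts (union s (fun y => y = n)) N1 \/ rejects (union s (fun y => y = n)) N1).
  { apply Hdec; [apply finset_union; [auto|apply finset_single] | intros k [Hk| ->]; auto | apply finset_union; [auto|apply finset_single]]. }
  destruct Hd as [Ha|]; auto. exfalso; apply HK; exists n; split; auto; split; auto. }
apply (Hr Y HY). { intros k [Hk _]; auto. }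
intros X HX HXY.
destruct (least_ex (set_after X s)) as [n [Hn Hmin]].
{ destruct (infinite_after X s HX Hs 0%nat) as [k [_ Hk]]; eauto. }
destruct (HXY n (proj1 Hn)) as [_ [_ Hacc]].
destruct (Hacc X HX) as [u [Fu Iu]].
{ intros k Hk; apply (HXY k Hk). }
exists u; split; auto.
replace (union s (set_after X s)) with (union (union s (fun y => y = n)) (set_after X (union s (fun y => y = n)))); auto.
apply set_ext; intro k; unfold union, set_after in *; split.
- intros [[H| ->]|[H1 H2]]; auto; destruct Hn; right; split; auto.
- intros [H|[H1 H2]]; auto.
  assert (n <= k)%nat by (apply Hmin; split; auto).
  destruct (Nat.eq_dec n k) as [->|Hne]; auto.
  right; split; auto. intros y [Hy| ->]; auto. lia.
Qed.

Lemma GP A : infinite A -> exists N, infinite N /\ subset N A /\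
  ((forall X, infinite X -> subset X N -> exists u, F u /\ initial_seg u X) \/
   (forall X, infinite X -> subset X N -> forall u, F u -> initial_seg u X -> False)).
Proof.
intro HA.
destruct (fusion Pdec Pdec_mono Pdec_dense A HA) as [N1 [HN1 [HN1A Hdec]]].
set (Prej := fun s A => (finset s /\ subset s N1 /\ rejects s N1) ->
   forall n, A n -> N1 n -> (forall y, s y -> (y < n)%nat) -> rejects (union s (fun y => y = n)) N1).
assert (Pm : forall s A A', Prej s A' -> (forall x, A x -> (forall y, s y -> (y < x)%nat) -> A' x) -> Prej s A).
{ intros s B B' H HB Hh n Bn N1n Hab. apply H; auto. }
assert (Pd : forall s A, finset s -> infinite A -> exists A', infinite A' /\ subset A' A /\ Prej s A').
{ intros s B Hs HB. destruct (classic (finset s /\ subset s N1 /\ rejects s N1)) as [[H1 [H2 H3]]|Hn].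
  - destruct (F4 N1 s Hdec H1 H2 H3) as [K HK].
    exists (above B K); repeat split.
    + apply infinite_above; auto.
    + intros k [Hk _]; auto.
    + intros _ n [Bn Kn] N1n Hab. apply HK; auto; lia.
  - exists B; repeat split; auto. intros k Hk; auto. intro; contradiction. }
destruct (fusion Prej Pm Pd N1 HN1) as [N2 [HN2 [HN2A Hrej]]].
exists N2; repeat split; auto. { intros k Hk; apply HN1A, HN2A, Hk. }
assert (He : finset empty) by (exists 0%nat; intros k []).
destruct (Hdec empty He (fun k (h : empty k) => match h with end) He) as [Ha|Hr].
- left. intros X HX HXN. destruct (Ha X HX) as [u [Fu Iu]].
  { intros k Hk; apply HN2A, HXN, Hk. }
  exists u; split; auto.
  replace X with (union empty (set_after X empty)); auto.
  apply set_ext; intro k; unfold union, set_after, empty; split; [tauto|].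
  intro; right; split; auto; intros y [].
- right. unfold Prej in Hrej.
  assert (Hall : forall b s, subset s N2 -> (forall x, s x -> (x < b)%nat) -> rejects s N1).
  { induction b as [|b IH]; intros s HsN Hb.
    - replace s with empty; auto. apply set_ext; intro k; split; [intros []|intro H; specialize (Hb k H); lia].
    - set (s' := fun x => s x /\ (x < b)%nat).
      assert (Hs' : rejects s' N1). { apply IH. intros k [Hk _]; auto. intros k [_ Hk]; auto. }
      destruct (classic (s b)) as [Hsb|Hsb].
      + replace s with (union s' (fun y => y = b)).
        * assert (fs' : finset s') by (exists b; intros k [_ Hk]; auto).
          assert (ss' : subset s' N2) by (intros k [Hk _]; auto).
          apply (Hrej s' fs' ss').
          -- repeat split; auto. intros k Hk; apply HN2A, ss', Hk.
          -- apply HsN, Hsb.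
          -- apply HN2A, HsN, Hsb.
          -- intros y [_ Hy]; auto.
        * apply set_ext; intro k; unfold union, s'; split.
          { intros [[H _]| ->]; auto. }
          { intro Hk. specialize (Hb k Hk). destruct (Nat.eq_dec k b); auto. left; split; auto; lia. }
      + replace s with s'; auto. apply set_ext; intro k; unfold s'; split; [tauto|].
        intro Hk; split; auto. specialize (Hb k Hk). destruct (Nat.eq_dec k b); subst; [contradiction|lia]. }
  intros X HX HXN u Fu Iu.
  destruct (Ffin u Fu) as [b Hb].
  assert (Hru : rejects u N1). { apply (Hall b); auto. intros k Hk; apply HXN, (proj1 Iu), Hk. }
  apply (Hru N1 HN1 (fun k h => h)).
  intros Y HY HYN. exists u; split; auto. apply initial_seg_self_union.
Qed.
End Forcing.

Definition thin (G : natset -> Prop) := forall u v, G u -> G v -> subset u v -> subset v u.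

Lemma init_comparable u v X : initial_seg u X -> initial_seg v X -> subset u v \/ subset v u.
Proof.
intros [Hu1 Hu2] [Hv1 Hv2].
destruct (classic (subset u v)) as [H|H]; auto. right.
unfold subset in H. apply not_all_ex_not in H as [x Hx]. apply imply_to_and in Hx as [ux nvx].
intros y vy. apply NNPP; intro nuy.
assert (y < x)%nat by (apply Hv2; auto; split; auto).
assert (x < y)%nat by (apply Hu2; auto; split; auto).
lia.
Qed.

Lemma extend v N : finset v -> subset v N -> infinite N ->
  infinite (union v (set_after N v)) /\ subset (union v (set_after N v)) N /\ initial_seg v (union v (set_after N v)).
Proof.
intros Hv HvN HN. split; [|split].
- intro m. destruct (infinite_after N v HN Hv m) as [k [Hk Hk2]]. exists k; split; auto; right; auto.
- intros k [Hk|[Hk _]]; auto.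
- apply initial_seg_self_union.
Qed.

Lemma thin_ramsey (G : natset -> Prop) : (forall u, G u -> finset u) -> thin G ->
  forall (Q : natset -> Prop) A, infinite A -> exists N, infinite N /\ subset N A /\
   ((forall u, G u -> subset u N -> Q u) \/ (forall u, G u -> subset u N -> ~ Q u)).
Proof.
intros Gfin Gthin Q A HA.
assert (key : forall (R : natset -> Prop) N, infinite N ->
  (forall X, infinite X -> subset X N -> exists u, (G u /\ R u) /\ initial_seg u X) ->
  forall v, G v -> subset v N -> R v).
{ intros R N HN H v Gv HvN. destruct (extend v N (Gfin v Gv) HvN HN) as [E1 [E2 E3]].
  destruct (H _ E1 E2) as [u [[Gu Ru] Iu]].
  replace v with u; auto.
  destruct (init_comparable u v _ Iu E3) as [H1|H1].
  - apply set_ext; intro k; split; auto. apply (Gthin u v Gu Gv H1).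
  - apply set_ext; intro k; split; [apply (Gthin v u Gv Gu H1)|]; auto. }
destruct (GP (fun u => G u /\ Q u)) with (A := A) as [N1 [HN1 [HN1A [Ha1|Hr1]]]]; auto.
{ intros u [Gu _]; auto. }
- exists N1; repeat split; auto. left. apply (key Q N1); auto.
- destruct (GP (fun u => G u /\ ~ Q u)) with (A := N1) as [N2 [HN2 [HN2A [Ha2|Hr2]]]]; auto.
  { intros u [Gu _]; auto. }
  + exists N2; repeat split; auto. intros k Hk; apply HN1A, HN2A, Hk.
    right. apply (key (fun u => ~ Q u) N2); auto.
  + exists N2; repeat split; auto. intros k Hk; apply HN1A, HN2A, Hk.
    left. intros v Gv HvN. destruct (extend v N2 (Gfin v Gv) HvN HN2) as [E1 [E2 E3]].
    apply NNPP; intro nQ. apply (Hr2 _ E1 E2 v); auto.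
Qed.

Lemma half_pos n : 0 < (/2)^n.
Proof. apply pow_lt; lra. Qed.

Lemma half_pow_le m k : (/2)^(m+k) <= (/2)^m.
Proof. induction k. { rewrite Nat.add_0_r; lra. }
rewrite Nat.add_succ_r; simpl. pose proof (half_pos (m+k)). lra. Qed.

Lemma half_pow_le' m n : (m <= n)%nat -> (/2)^n <= (/2)^m.
Proof. intro H; replace n with (m + (n - m))%nat by lia; apply half_pow_le. Qed.

Definition lub (t : natset) (b : nat) := (forall x, t x -> (x < b)%nat) /\ (b = 0%nat \/ t (pred b)).
Definition lubf (t : natset) : nat := epsilon (inhabits 0%nat) (lub t).

Lemma lub_unique t b b' : lub t b -> lub t b' -> b = b'.
Proof.
intros [H1 H2] [H1' H2'].
assert (b <= b')%nat by (destruct H2 as [->|H]; [lia|specialize (H1' _ H); lia]).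
assert (b' <= b)%nat by (destruct H2' as [->|Hh]; [lia|specialize (H1 _ Hh); lia]).
lia.
Qed.

Lemma lubf_eq t b : lub t b -> lubf t = b.
Proof. intro H. apply (lub_unique t); auto. unfold lubf. apply (@epsilon_spec _ _ (lub t)); eauto. Qed.

Fixpoint psum (a : nat -> R) (n : nat) : R :=
  match n with O => 0 | S n => psum a n + a n end.

Lemma sum_psum a n : sum_f_R0 a n = psum a (S n).
Proof. induction n; simpl; [lra|]. simpl in IHn. rewrite IHn. lra. Qed.

Section Main.
Variable (B : natset -> Prop) (f : natset -> nat -> R) (C eps : R).
Hypothesis Bfin : forall s, B s -> finset s.
Hypothesis Bthin : forall s t, B s -> B t -> subset s t -> subset t s.
Hypothesis HC : forall s, B s -> forall i, Rabs (f s i) <= C.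
Hypothesis HC0 : 0 <= C.
Hypothesis Heps : 0 < eps.

Definition Gt t u := B (union t u) /\ set_lt t u /\ (exists x, u x).
Definition Hom t A a b := forall u, Gt t u -> subset u A -> forall m, is_min m u -> a <= f (union t u) m <= b.

Lemma Gt_fin t u : Gt t u -> finset u.
Proof. intros [H _]. apply (finset_sub u (union t u)); [intros k Hk; right; auto|apply Bfin; auto]. Qed.

Lemma Gt_thin t : thin (Gt t).
Proof.
intros u v [Bu [Lu _]] [Bv [Lv _]] Huv x vx.
assert (H : subset (union t u) (union t v)) by (intros k [Hk|Hk]; [left|right]; auto).
destruct (Bthin _ _ Bu Bv H x (or_intror vx)) as [tx|ux]; auto.
specialize (Lv x x tx vx); lia.
Qed.

Lemma is_min_unique m m' X : is_min m X -> is_min m' X -> m = m'.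
Proof. intros [H1 H2] [H1' H2']. specialize (H2 _ H1'); specialize (H2' _ H1); lia. Qed.

Lemma halving t : forall k A, infinite A -> exists N, infinite N /\ subset N A /\
  exists a, Hom t N a (a + 2*C*(/2)^k).
Proof.
induction k as [|k IH]; intros A HA.
- exists A; split; auto; split; [intros x Hx; auto|]. exists (-C).
  intros u [Bu _] _ m _. pose proof (HC _ Bu m) as H.
  pose proof (Rle_abs (f (union t u) m)). pose proof (Rle_abs (- f (union t u) m)).
  rewrite Rabs_Ropp in *. simpl. lra.
- destruct (IH A HA) as [N [HN [HNA [a Ha]]]].
  set (w := 2*C*(/2)^k).
  assert (E : 2*C*(/2)^(S k) = w/2) by (unfold w; simpl; field).
  rewrite E. set (mid := a + w/2).
  destruct (thin_ramsey (Gt t) (Gt_fin t) (Gt_thin t)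
     (fun u => forall m, is_min m u -> f (union t u) m <= mid) N HN) as [N' [HN' [HN'N [HL|HR]]]].
  + exists N'; split; auto; split; [intros x Hx; apply HNA, HN'N, Hx|]. exists a.
    intros u Gu Hu m Hm. assert (Hu' : subset u N) by (intros x Hx; apply HN'N, Hu, Hx).
    pose proof (Ha u Gu Hu' m Hm). pose proof (HL u Gu Hu m Hm). unfold mid in *; fold w in H; lra.
  + exists N'; split; auto; split; [intros x Hx; apply HNA, HN'N, Hx|]. exists mid.
    intros u Gu Hu m Hm. assert (Hu' : subset u N) by (intros x Hx; apply HN'N, Hu, Hx).
    pose proof (Ha u Gu Hu' m Hm). specialize (HR u Gu Hu).
    apply not_all_ex_not in HR as [m0 Hm0]. apply imply_to_and in Hm0 as [Hm0 Hf].
    rewrite <- (is_min_unique _ _ _ Hm0 Hm) in *. apply Rnot_le_lt in Hf.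
    unfold mid in *; fold w in H; lra.
Qed.

Definition tol (t : natset) := eps * (/2)^(S (lubf t)).

Lemma tol_pos t : 0 < tol t.
Proof. unfold tol; pose proof (half_pos (S (lubf t))); nra. Qed.

Definition Pmain t A := exists c, forall u, Gt t u -> subset u A -> forall m, is_min m u ->
  Rabs (f (union t u) m - c) <= tol t.

Lemma Pmain_mono s A A' : Pmain s A' -> (forall x, A x -> (forall y, s y -> (y < x)%nat) -> A' x) -> Pmain s A.
Proof.
intros [c Hc] HA. exists c. intros u Gu Hu m Hm. apply Hc; auto.
intros x Hx. apply HA; auto. intros y Hy. destruct Gu as [_ [L _]]. apply L; auto.
Qed.

Lemma Pmain_dense s A : finset s -> infinite A -> exists A', infinite A' /\ subset A' A /\ Pmain s A'.
Proof.
intros _ HA. pose proof (tol_pos s) as Ht.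
assert (Hy : 0 < tol s / (2*C+1)) by (apply Rdiv_lt_0_compat; lra).
destruct (pow_lt_1_zero (/2) ltac:(rewrite Rabs_pos_eq; lra) _ Hy) as [K HK].
specialize (HK K (le_n K)). pose proof (half_pos K) as Hp.
rewrite Rabs_pos_eq in HK by lra.
assert (Hw : 2*C*(/2)^K <= tol s).
{ assert ((2*C+1)*(/2)^K < (2*C+1)*(tol s/(2*C+1))) by (apply Rmult_lt_compat_l; lra).
  replace ((2*C+1)*(tol s/(2*C+1))) with (tol s) in H by (field; lra). nra. }
destruct (halving s K A HA) as [N [HN [HNA [a Ha]]]].
exists N; split; auto; split; auto. exists a. intros u Gu Hu m Hm.
specialize (Ha u Gu Hu m Hm). apply Rabs_le; lra.
Qed.

Variable N : natset.
Hypothesis HPN : forall t, finset t -> subset t N -> Pmain t N.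

Definition phi (t : natset) : R := epsilon (inhabits 0) (fun c => forall u, Gt t u -> subset u N -> forall m, is_min m u ->
  Rabs (f (union t u) m - c) <= tol t).

Definition gfun (s : natset) (i : nat) : R :=
  if excluded_middle_informative (s i) then phi (fun x => s x /\ (x < i)%nat) else 0.

Lemma err s i : B s -> subset s N -> s i -> Rabs (f s i - gfun s i) <= tol (fun x => s x /\ (x < i)%nat).
Proof.
intros Bs HsN si. unfold gfun. destruct (excluded_middle_informative (s i)) as [_|n]; [|contradiction].
set (t := fun x => s x /\ (x < i)%nat). set (u := fun x => s x /\ (i <= x)%nat).
assert (Eu : union t u = s).
{ apply set_ext; intro k; unfold union, t, u; split; [tauto|]. intro; destruct (le_lt_dec i k); tauto. }
assert (Hspec : forall u, Gt t u -> subset u N -> forall m, is_min m u -> Rabs (f (union t u) m - phi t) <= tol t).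
{ unfold phi. apply (@epsilon_spec _ _ (fun c => forall u, Gt t u -> subset u N -> forall m, is_min m u ->
  Rabs (f (union t u) m - c) <= tol t)). apply HPN.
  - destruct (Bfin s Bs) as [b Hb]; exists b; intros k [Hk _]; auto.
  - intros k [Hk _]; auto. }
rewrite <- Eu at 1. apply Hspec.
- split; [rewrite Eu; auto|split].
  + intros x y [_ Hx] [_ Hy]; lia.
  + exists i; split; auto.
- intros k [Hk _]; auto.
- split; [split; auto|]. intros k [_ Hk]; auto.
Qed.

Lemma gfun_zero s i : ~ s i -> gfun s i = 0.
Proof. intro H; unfold gfun; destruct (excluded_middle_informative (s i)); [contradiction|auto]. Qed.

Lemma invariant (s : natset) (a : nat -> R) :
  (forall i, ~ s i -> a i = 0) ->
  (forall i, s i -> a i <= tol (fun x => s x /\ (x < i)%nat)) ->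
  forall n, exists b, lub (fun x => s x /\ (x < n)%nat) b /\ (b <= n)%nat /\ psum a n <= eps - eps*(/2)^b.
Proof.
intros H0 H1. induction n as [|n [b [Hb [Hbn Hs]]]].
- exists 0%nat; split; [split; [intros x [_ Hx]; lia|auto]|]. simpl; split; [lia|lra].
- destruct (classic (s n)) as [sn|sn].
  + exists (S n). split; [split|split; [lia|]].
    * intros x [_ Hx]; lia.
    * right; simpl; split; auto.
    * simpl. specialize (H1 n sn). unfold tol in H1. rewrite (lubf_eq _ b Hb) in H1.
      simpl in H1. pose proof (half_pow_le' (S b) (S n) ltac:(lia)). simpl in H.
      assert (eps * (/2*(/2)^n) <= eps * (/2*(/2)^b)) by (apply Rmult_le_compat_l; lra). lra.
  + exists b. split; [split|split; [lia|]].
    * intros x [sx Hx]. destruct Hb as [Hb _]. apply Hb; split; auto.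
      destruct (Nat.eq_dec x n); [subst; contradiction|lia].
    * destruct Hb as [_ [Hb|[Hb1 Hb2]]]; [left; auto|right; split; auto; lia].
    * simpl. rewrite (H0 n sn). lra.
Qed.

Lemma l1_bound s : B s -> subset s N -> internal B f -> l1_norm_le (fun i => f s i - gfun s i) eps.
Proof.
intros Bs HsN Hint.
set (a := fun i => Rabs (f s i - gfun s i)).
assert (H0 : forall i, ~ s i -> a i = 0).
{ intros i ni. unfold a. rewrite gfun_zero; auto.
  assert (f s i = 0) as -> by (apply NNPP; intro Hne; apply ni, (Hint s Bs i Hne)).
  rewrite Rminus_0_r, Rabs_R0; auto. }
assert (H1 : forall i, s i -> a i <= tol (fun x => s x /\ (x < i)%nat)) by (intros i si; apply err; auto).
destruct (Bfin s Bs) as [n0 Hn0].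
exists (psum a n0). split.
- intros e He. exists n0. intros n Hn. unfold R_dist. rewrite sum_psum.
  assert (forall k, psum a (n0 + k) = psum a n0).
  { induction k; [rewrite Nat.add_0_r; auto|]. rewrite Nat.add_succ_r; simpl. rewrite IHk, H0; [lra|].
    intro Hs; specialize (Hn0 _ Hs); lia. }
  replace (S n) with (n0 + (S n - n0))%nat by lia. rewrite H, Rminus_diag, Rabs_R0; auto.
- destruct (invariant s a H0 H1 n0) as [b [_ [_ Hb]]]. pose proof (half_pos b). nra.
Qed.

End Main.

Lemma prefix_eq s t m : initial_seg t s -> is_min m (set_after s t) -> (fun x => s x /\ (x < m)%nat) = t.
Proof.
intros [H1 H2] [[sm Hm1] Hm2]. apply set_ext; intro k; split.
- intros [sk km]. apply NNPP; intro nt.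
  assert (m <= k)%nat. { apply Hm2; split; auto. intros y ty. apply H2; auto. split; auto. }
  lia.
- intro tk; split; auto.
Qed.

Theorem mainTheorem1 (M : natset) (B : natset -> Prop) (f : natset -> nat -> R) :
  infinite M -> barrier B M ->
  (forall s, B s -> in_c0 (f s)) ->
  internal B f ->
  (exists C, forall s, B s -> sup_norm_le (f s) C) ->
  forall eps, 0 < eps ->
  exists (N : natset) (g : natset -> nat -> R),
    subset N M /\ infinite N /\
    (forall s, restrict B N s -> in_c00 (g s)) /\
    U_mapping (restrict B N) g /\
    (forall s, restrict B N s -> l1_norm_le (fun i => f s i - g s i) eps).
Proof.
intros HM [Hb1 [Hb2 _]] _ Hint [C HC] eps Heps.
assert (Bfin : forall s, B s -> finset s) by (intros s Hs; apply (Hb1 s Hs)).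
assert (HC' : forall s, B s -> forall i, Rabs (f s i) <= Rabs C).
{ intros s Hs i. eapply Rle_trans; [apply (HC s Hs i)|apply Rle_abs]. }
destruct (fusion (Pmain B f eps) (Pmain_mono B f eps)
   (Pmain_dense B f (Rabs C) eps Bfin Hb2 HC' (Rabs_pos C) Heps) M HM) as [N [HN [HNM HP]]].
exists N, (gfun B f eps N). split; [auto|split; [auto|split; [|split; [split|]]]].
- intros s [Bs HsN]. destruct (Bfin s Bs) as [b Hb]. exists b. intros i Hi.
  apply gfun_zero. intro si; specialize (Hb i si); lia.
- intros s _ i Hi. unfold supp, gfun in Hi.
  destruct (excluded_middle_informative (s i)); auto. contradiction.
- intros t _ s s' m m' _ _ It It' Hm Hm'. unfold gfun.
  destruct (excluded_middle_informative (s m)) as [_|n]; [|destruct Hm as [[? _] _]; contradiction].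
  destruct (excluded_middle_informative (s' m')) as [_|n]; [|destruct Hm' as [[? _] _]; contradiction].
  rewrite (prefix_eq s t m It Hm), (prefix_eq s' t m' It' Hm'). reflexivity.
- intros s [Bs HsN]. apply l1_bound; auto.
Qed.
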